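(* Let $a>0$, let $m$ be the fixed positive integer of the standing setting, let $0<h\le a$, $\gamma>0$, and $1\le k\le m$. For any $g\in\mathcal C^k[0,h]$ define $w(x):=g(x)x^{\gamma-1}$ for $0<x\le h$ and $w(0):=0$. Then $w\in\mathcal C^{k-1}[0,h]$ and \[ \|w\|_{C^{k-1}[0,h]}\le C\|g^{(k)}\|_{C[0,h]}, \] where $C$ is a positive constant depending only on $a$, $k$ and $\gamma$.
   Context: Standing setting: $0<\alpha<1$, $n$ a positive integer, $m:=\max\{j\in\{0,1,2,\dots\}:j<n\alpha\}$. $C^k[0,h]$ denotes the $k$ times continuously differentiable functions on $[0,h]$ with norm $\|v\|_{C^k[0,h]}=\max_{0\le j\le k}\max_{[0,h]}|v^{(j)}|$, and $\mathcal C^k[0,h]:=\{v\in C^k[0,h]: v^{(j)}(0)=0,\ j=0,1,\dots,k\}$. *)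

(* Defs.v *)
From Stdlib Require Import Reals.
From Coquelicot Require Import Coquelicot.
Open Scope R_scope.

Definition Icc (h x : R) : Prop := 0 <= x <= h.

Definition is_m (alpha : R) (n m : nat) : Prop :=
  INR m < INR n * alpha /\ (forall j : nat, INR j < INR n * alpha -> (j <= m)%nat).

Definition derive_within (D : R -> Prop) (f : R -> R) (x l : R) : Prop :=
  filterlim (fun y => (f y - f x) / (y - x))
            (within (fun y => D y /\ y <> x) (locally x)) (locally l).

Definition cont_within (D : R -> Prop) (f : R -> R) (x : R) : Prop :=
  filterlim f (within D (locally x)) (locally (f x)).

Definition Ck_derivs (k : nat) (h : R) (f : R -> R) (F : nat -> R -> R) : Prop :=
  (forall x, Icc h x -> F O x = f x) /\
  (forall j, (j <= k)%nat -> forall x, Icc h x -> cont_within (Icc h) (F j) x) /\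
  (forall j, (j < k)%nat -> forall x, Icc h x -> derive_within (Icc h) (F j) x (F (S j) x)).

(* membership in the space \mathcal C^k[0,h]: derivatives up to order k vanish at 0 *)
Definition calC (k : nat) (h : R) (f : R -> R) (F : nat -> R -> R) : Prop :=
  Ck_derivs k h f F /\ (forall j, (j <= k)%nat -> F j 0 = 0).

Definition Ck_norm_le (k : nat) (h : R) (F : nat -> R -> R) (M : R) : Prop :=
  forall j, (j <= k)%nat -> forall x, Icc h x -> Rabs (F j x) <= M.

Definition wfun (gamma : R) (g : R -> R) (x : R) : R :=
  if Rlt_dec 0 x then g x * Rpower x (gamma - 1) else 0.

(* Main.v *)
Require Import Defs.
From Stdlib Require Import Reals Lra Lia.
From Coquelicot Require Import Coquelicot.
Open Scope R_scope.

Lemma lim_mult {T} (F : (T -> Prop) -> Prop) {FF : Filter F} (f g : T -> R) a b :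
  filterlim f F (locally a) -> filterlim g F (locally b) ->
  filterlim (fun y => f y * g y) F (locally (a * b)).
Proof. intros Hf Hg. eapply filterlim_comp_2; [exact Hf|exact Hg|]. apply (filterlim_mult a b). Qed.

Lemma lim_plus {T} (F : (T -> Prop) -> Prop) {FF : Filter F} (f g : T -> R) a b :
  filterlim f F (locally a) -> filterlim g F (locally b) ->
  filterlim (fun y => f y + g y) F (locally (a + b)).
Proof. intros Hf Hg. eapply filterlim_comp_2; [exact Hf|exact Hg|]. apply (filterlim_plus a b). Qed.

Lemma lim_id_within (D : R -> Prop) x : filterlim (fun y => y) (within D (locally x)) (locally x).
Proof. intros P HP. unfold filtermap, within. eapply filter_imp; [|exact HP]. auto. Qed.

Lemma lim_plus' {T} (F : (T -> Prop) -> Prop) {FF : Filter F} (f g : T -> R) a b c :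
  c = a + b -> filterlim f F (locally a) -> filterlim g F (locally b) ->
  filterlim (fun y => f y + g y) F (locally c).
Proof. intros ->. exact (lim_plus F f g a b). Qed.
Lemma lim_mult' {T} (F : (T -> Prop) -> Prop) {FF : Filter F} (f g : T -> R) a b c :
  c = a * b -> filterlim f F (locally a) -> filterlim g F (locally b) ->
  filterlim (fun y => f y * g y) F (locally c).
Proof. intros ->. exact (lim_mult F f g a b). Qed.

Lemma derive_within_cont_punct D f x l : derive_within D f x l ->
  filterlim f (within (fun y => D y /\ y <> x) (locally x)) (locally (f x)).
Proof.
  intros H.
  apply filterlim_within_ext with (f := fun y => f x + (f y - f x) / (y - x) * (y - x)).
  { intros y [_ Hy]. field. lra. }
  refine (lim_plus' _ _ _ (f x) (l * 0) _ _ _ _); [ring|apply filterlim_const|].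
  refine (lim_mult _ _ _ _ _ _ _); [exact H|].
  apply filterlim_ext with (fun y => y + - x); [intros; ring|].
  refine (lim_plus' _ _ _ x (- x) _ _ _ _); [ring|apply lim_id_within| apply filterlim_const].
Qed.

Lemma derive_within_cont D f x l : derive_within D f x l -> cont_within D f x.
Proof.
  intros H. apply derive_within_cont_punct in H.
  intros P HP. specialize (H P HP). unfold filtermap, within in *.
  eapply filter_imp; [|exact H]. intros y Hy Dy.
  destruct (Req_dec y x) as [->|n]; [now apply locally_singleton|auto].
Qed.

Lemma derive_within_plus D f g x lf lg : derive_within D f x lf -> derive_within D g x lg ->
  derive_within D (fun y => f y + g y) x (lf + lg).
Proof.
  intros Hf Hg. unfold derive_within.
  apply filterlim_within_ext with (f := fun y => (f y - f x)/(y - x) + (g y - g x)/(y-x)).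
  { intros y [_ Hy]. field. lra. }
  exact (lim_plus _ _ _ _ _ Hf Hg).
Qed.

Lemma derive_within_mult D f g x lf lg : derive_within D f x lf -> derive_within D g x lg ->
  derive_within D (fun y => f y * g y) x (lf * g x + f x * lg).
Proof.
  intros Hf Hg. unfold derive_within.
  apply filterlim_within_ext with (f := fun y => (f y - f x)/(y - x) * g y + f x * ((g y - g x)/(y-x))).
  { intros y [_ Hy]. field. lra. }
  refine (lim_plus _ _ _ _ _ _ _); refine (lim_mult _ _ _ _ _ _ _); auto.
  - now apply derive_within_cont_punct in Hg.
  - apply filterlim_const.
Qed.

Lemma derive_within_const D c x : derive_within D (fun _ => c) x 0.
Proof.
  unfold derive_within.
  apply filterlim_within_ext with (f := fun _ => 0).
  { intros y [_ Hy]. field. lra. }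
  apply filterlim_const.
Qed.

Lemma derive_within_ext D f g x l : (forall y, D y -> f y = g y) -> D x ->
  derive_within D f x l -> derive_within D g x l.
Proof.
  intros E Dx H. unfold derive_within.
  apply filterlim_within_ext with (f := fun y => (f y - f x)/(y - x)).
  { intros y [Dy _]. rewrite !E; auto. }
  exact H.
Qed.

Lemma derive_within_ext_pos D f g x l : 0 < x -> (forall y, D y -> 0 < y -> f y = g y) -> D x ->
  derive_within D f x l -> derive_within D g x l.
Proof.
  intros x0 E Dx H. unfold derive_within.
  eapply filterlim_ext_loc; [|exact H].
  unfold within. exists (mkposreal x x0). intros y Hy [Dy _].
  assert (0 < y).
  { unfold ball in Hy; simpl in Hy; unfold AbsRing_ball, abs, minus, plus, opp in Hy; simpl in Hy.
    apply Rabs_lt_between in Hy. lra. }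
  rewrite !E; auto.
Qed.

Lemma is_derive_within D f x l : is_derive f x l -> derive_within D f x l.
Proof.
  intros H. apply is_derive_Reals in H. unfold derive_within.
  apply filterlim_locally. intros eps.
  destruct (H eps (cond_pos eps)) as [d Hd].
  exists d. intros y Hy [_ Hyx].
  specialize (Hd (y - x)). assert (E: forall u v : R, u + (v - u) = v) by (intros; ring). rewrite E in Hd.
  unfold ball; simpl; unfold AbsRing_ball, abs, minus, plus, opp; simpl.
  unfold ball in Hy; simpl in Hy; unfold AbsRing_ball, abs, minus, plus, opp in Hy; simpl in Hy.
  apply Hd; [lra| exact Hy].
Qed.

Lemma derive_within_interior h f x l : 0 < x < h -> derive_within (Icc h) f x l -> is_derive f x l.
Proof.
  intros Hx H. apply is_derive_Reals. intros eps Heps.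
  destruct (proj1 (filterlim_locally _ _) H (mkposreal eps Heps)) as [d Hd].
  assert (dp : 0 < Rmin d (Rmin x (h - x))).
  { apply Rmin_pos; [apply cond_pos|apply Rmin_pos; lra]. }
  exists (mkposreal _ dp). intros hh hh0 hhd. simpl in hhd.
  assert (A1 := Rmin_l d (Rmin x (h-x))). assert (A2 := Rmin_r d (Rmin x (h-x))).
  assert (A3 := Rmin_l x (h-x)). assert (A4 := Rmin_r x (h-x)).
  specialize (Hd (x + hh)).
  replace (x + hh - x) with hh in Hd by ring.
  unfold ball in Hd; simpl in Hd; unfold AbsRing_ball, abs, minus, plus, opp in Hd; simpl in Hd.
  apply Rabs_lt_between in hhd.
  apply Hd.
  - replace (x + hh + - x) with hh by ring. apply Rabs_def1; lra.
  - unfold Icc. split; [lra|]. intro E. apply hh0. lra.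
Qed.


Lemma ball_R (x e y : R) : ball x e y <-> Rabs (y - x) < e.
Proof. unfold ball; simpl; unfold AbsRing_ball, abs, minus, plus, opp; simpl. tauto. Qed.

Lemma Rpower_pos x y : 0 < Rpower x y.
Proof. unfold Rpower. apply exp_pos. Qed.

Lemma lim0 gam (D : R -> Prop) f B : 0 < gam ->
  (forall y, D y -> y = 0 -> f y = 0) -> (forall y, D y -> 0 <= y) ->
  (exists r, 0 < r /\ forall y, D y -> 0 < y < r -> Rabs (f y) <= B * Rpower y gam) ->
  filterlim f (within D (locally 0)) (locally 0).
Proof.
  intros hg H0 Hnn [r [rp Hb]].
  apply filterlim_locally. intros eps.
  set (B' := Rabs B + 1).
  assert (B'p : 0 < B') by (unfold B'; generalize (Rabs_pos B); lra).
  set (d := Rpower (eps / B') (/ gam)).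
  assert (dp : 0 < Rmin r d) by (apply Rmin_pos; [lra| apply Rpower_pos]).
  exists (mkposreal _ dp). intros y Hy Dy. apply ball_R. apply ball_R in Hy. change (Rabs (y - 0) < Rmin r d) in Hy.
  rewrite Rminus_0_r in Hy |- *.
  assert (A1 := Rmin_l r d). assert (A2 := Rmin_r r d).
  assert (y0 := Hnn y Dy). rewrite Rabs_right in Hy by lra.
  destruct (Req_dec y 0) as [E|ny].
  - rewrite (H0 y Dy E), Rabs_R0. apply cond_pos.
  - assert (yp : 0 < y) by lra.
    eapply Rle_lt_trans; [apply Hb; auto; lra|].
    assert (Rpower y gam < eps / B').
    { replace (eps / B') with (Rpower d gam).
      - apply Rlt_Rpower_l; auto; lra.
      - unfold d. rewrite Rpower_mult. replace (/ gam * gam) with 1 by (field; lra).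
        apply Rpower_1. apply Rdiv_lt_0_compat; [apply cond_pos| auto]. }
    assert (B * Rpower y gam <= B' * Rpower y gam).
    { apply Rmult_le_compat_r; [left; apply Rpower_pos|]. unfold B'. generalize (Rle_abs B). lra. }
    apply Rmult_lt_compat_l with (r := B') in H; auto.
    replace (B' * (eps / B')) with (pos eps) in H by (field; lra). lra.
Qed.

Lemma derive_within_sum D x (f : nat -> R -> R) (l : nat -> R) n :
  (forall i, (i <= n)%nat -> derive_within D (f i) x (l i)) ->
  derive_within D (fun y => sum_f_R0 (fun i => f i y) n) x (sum_f_R0 l n).
Proof.
  induction n; intros H; simpl.
  - apply H; lia.
  - apply derive_within_plus; [apply IHn; intros; apply H; lia| apply H; lia].
Qed.

Definition clamp y t := Rmax 0 (Rmin t y).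

Lemma clamp_lip y t u : 0 <= y -> Rabs (clamp y u - clamp y t) <= Rabs (u - t).
Proof.
  intros. unfold clamp, Rmax, Rmin.
  repeat destruct Rle_dec; unfold Rabs; repeat destruct Rcase_abs; lra.
Qed.

Lemma clamp_in y t : 0 <= y -> 0 <= clamp y t <= y.
Proof. intros. unfold clamp, Rmax, Rmin. repeat destruct Rle_dec; lra. Qed.

Lemma mvt_bound h f f' y L : 0 < y <= h ->
  (forall t, Icc h t -> cont_within (Icc h) f t) ->
  (forall t, 0 < t < h -> derive_within (Icc h) f t (f' t)) ->
  (forall t, 0 <= t <= y -> Rabs (f' t) <= L) -> Rabs (f y - f 0) <= L * y.
Proof.
  intros Hy Hc Hd Hb.
  destruct (MVT_gen (fun t => f (clamp y t)) 0 y f') as [c [Hc1 Hc2]].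
  - rewrite Rmin_left, Rmax_right by lra. intros t Ht.
    apply is_derive_ext_loc with f.
    + assert (tp : 0 < Rmin t (y - t)) by (apply Rmin_pos; lra).
      exists (mkposreal _ tp). intros u Hu. apply ball_R in Hu. change (Rabs (u - t) < Rmin t (y - t)) in Hu.
      assert (A1 := Rmin_l t (y-t)). assert (A2 := Rmin_r t (y-t)).
      apply Rabs_lt_between in Hu.
      unfold clamp, Rmax, Rmin. repeat destruct Rle_dec; f_equal; lra.
    + apply derive_within_interior with h; [lra|]. apply Hd; lra.
  - rewrite Rmin_left, Rmax_right by lra. intros t Ht.
    apply continuity_pt_filterlim.
    assert (E : clamp y t = t) by (unfold clamp, Rmax, Rmin; repeat destruct Rle_dec; lra).
    rewrite E.
    apply (filterlim_comp _ _ _ (clamp y) f _ (within (Icc h) (locally t))).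
    + intros P [eps HP]. unfold filtermap. exists eps. intros u Hu.
      apply HP.
      * apply ball_R. apply ball_R in Hu. rewrite <- E.
        eapply Rle_lt_trans; [apply clamp_lip; lra| exact Hu].
      * pose proof (clamp_in y u). unfold Icc. lra.
    + apply Hc. unfold Icc; lra.
  - rewrite Rmin_left, Rmax_right in Hc1 by lra.
    assert (E1 : clamp y y = y) by (unfold clamp, Rmax, Rmin; repeat destruct Rle_dec; lra).
    assert (E0 : clamp y 0 = 0) by (unfold clamp, Rmax, Rmin; repeat destruct Rle_dec; lra).
    rewrite E1, E0 in Hc2. rewrite Hc2, Rminus_0_r, Rabs_mult, (Rabs_right y) by lra.
    apply Rmult_le_compat_r; [lra|]. apply Hb; lra.
Qed.


Lemma Gbound k h g G y0 M : Ck_derivs k h g G -> (forall j, (j<=k)%nat -> G j 0 = 0) ->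
  0 <= y0 <= h -> (forall y, 0 <= y <= y0 -> Rabs (G k y) <= M) ->
  forall d i, (i + d = k)%nat -> forall y, 0 <= y <= y0 -> Rabs (G i y) <= M * y ^ d.
Proof.
  intros [H0 [Hc Hd]] Hz Hy0 HM.
  assert (Mp : 0 <= M) by (eapply Rle_trans; [apply Rabs_pos| apply (HM 0); lra]).
  induction d; intros i Hi y Hy.
  - replace i with k by lia. simpl. rewrite Rmult_1_r. auto.
  - destruct (Req_dec y 0) as [->|ny].
    + rewrite Hz by lia. rewrite Rabs_R0. simpl. lra.
    + replace (G i y) with (G i y - G i 0) by (rewrite Hz by lia; ring).
      replace (M * y ^ S d) with ((M * y ^ d) * y) by (simpl; ring).
      apply mvt_bound with h (G (S i)).
      * lra.
      * intros t Ht. apply Hc. lia. exact Ht.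
      * intros t Ht. apply Hd. lia. unfold Icc; lra.
      * intros t Ht. eapply Rle_trans; [apply (IHd (S i)); [lia| lra]|].
        apply Rmult_le_compat_l; auto. apply pow_incr. lra.
Qed.

Fixpoint c (gam : R) (j i : nat) : R :=
  match j with
  | O => match i with O => 1 | _ => 0 end
  | S j' => (match i with O => 0 | S i' => c gam j' i' end) + (gam - 1 - INR j' + INR i) * c gam j' i
  end.
Definition e (gam : R) (j i : nat) : R := gam - 1 - INR j + INR i.

Lemma c_zero gam j i : (j < i)%nat -> c gam j i = 0.
Proof.
  revert i; induction j; intros i Hi; simpl.
  - destruct i; [lia|auto].
  - destruct i; [lia|]. rewrite !IHj by lia. ring.
Qed.

Lemma coef_identity gam (Gx : nat -> R) (P : R -> R) j :
  sum_f_R0 (fun i => (0 * Gx i + c gam j i * Gx (S i)) * P (e gam j i)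
                     + c gam j i * Gx i * (e gam j i * P (e gam j i - 1))) j
  = sum_f_R0 (fun i => c gam (S j) i * Gx i * P (e gam (S j) i)) (S j).
Proof.
  rewrite sum_plus.
  transitivity (sum_f_R0 (fun i => (match i with O => 0 | S i' => c gam j i' end) * Gx i * P (e gam (S j) i)) (S j)
    + sum_f_R0 (fun i => (gam - 1 - INR j + INR i) * c gam j i * Gx i * P (e gam (S j) i)) (S j)).
  - f_equal.
    + rewrite (decomp_sum _ (S j)) by lia. simpl pred. rewrite Rmult_0_l, Rmult_0_l, Rplus_0_l.
      apply sum_eq. intros i _. unfold e. rewrite !S_INR. 
      replace (gam - 1 - (INR j + 1) + (INR i + 1)) with (gam - 1 - INR j + INR i) by ring. ring.
    + rewrite tech5. rewrite (c_zero gam j (S j)) by lia. rewrite Rmult_0_r, !Rmult_0_l, Rplus_0_r.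
      apply sum_eq. intros i _. unfold e. rewrite !S_INR.
      replace (gam - 1 - (INR j + 1) + INR i) with (gam - 1 - INR j + INR i - 1) by ring. ring.
  - rewrite <- sum_plus. apply sum_eq. intros i _. simpl. ring.
Qed.


Definition T gam (G : nat -> R -> R) j i x := c gam j i * G i x * Rpower x (e gam j i).
Definition Wf gam G j x := if Rlt_dec 0 x then sum_f_R0 (fun i => T gam G j i x) j else 0.
Definition Sc gam j := sum_f_R0 (fun i => Rabs (c gam j i)) j.

Lemma Sc_nonneg gam j : 0 <= Sc gam j.
Proof. apply cond_pos_sum. intros; apply Rabs_pos. Qed.

Lemma term_le_sum (f : nat -> R) n i : (forall i, 0 <= f i) -> (i <= n)%nat -> f i <= sum_f_R0 f n.
Proof.
  intros Hf. induction n; intros Hi.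
  - replace i with 0%nat by lia. simpl. lra.
  - simpl. destruct (Nat.eq_dec i (S n)) as [->|ne].
    + generalize (cond_pos_sum f n Hf). lra.
    + generalize (IHn ltac:(lia)) (Hf (S n)). lra.
Qed.

Lemma pow_rpow gam y i j k : 0 < y -> (i <= j)%nat -> (j < k)%nat ->
  y ^ (k - i) * Rpower y (e gam j i) = y ^ (k - 1 - j) * Rpower y gam.
Proof.
  intros yp Hij Hjk.
  rewrite <- !Rpower_pow by auto. rewrite <- !Rpower_plus. f_equal.
  unfold e. rewrite !minus_INR by lia. simpl INR. ring.
Qed.

Lemma Wf_pos gam G j y : 0 < y -> Wf gam G j y = sum_f_R0 (fun i => T gam G j i y) j.
Proof. intros. unfold Wf. destruct Rlt_dec; [auto|lra]. Qed.

Lemma Wf_npos gam G j y : ~ 0 < y -> Wf gam G j y = 0.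
Proof. intros. unfold Wf. destruct Rlt_dec; [lra|auto]. Qed.

Lemma Wbound gam k h g G y0 M j y : Ck_derivs k h g G -> (forall j, (j<=k)%nat -> G j 0 = 0) ->
  0 <= y0 <= h -> (forall y, 0 <= y <= y0 -> Rabs (G k y) <= M) -> (j < k)%nat -> 0 < y <= y0 ->
  Rabs (Wf gam G j y) <= Sc gam j * M * y ^ (k - 1 - j) * Rpower y gam.
Proof.
  intros HG Hz Hy0 HM Hj Hy.
  rewrite Wf_pos by lra.
  eapply Rle_trans; [apply sum_f_R0_triangle|].
  eapply Rle_trans.
  - apply sum_Rle with (Bn := fun i => Rabs (c gam j i) * (M * y ^ (k - 1 - j) * Rpower y gam)).
    intros i Hi. unfold T. rewrite !Rabs_mult. rewrite (Rabs_right (Rpower _ _)) by (left; apply Rpower_pos).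
    assert (E := pow_rpow gam y i j k ltac:(lra) ltac:(lia) Hj).
    assert (E2: forall X, X * (M * y^(k-1-j) * Rpower y gam) = X * (M*y^(k-i)) * Rpower y (e gam j i))
      by (intro X; transitivity (X * M * (y ^ (k - 1 - j) * Rpower y gam)); [ring|]; rewrite <- E; ring).
    rewrite E2.
    apply Rmult_le_compat_r; [left; apply Rpower_pos|].
    apply Rmult_le_compat_l; [apply Rabs_pos|].
    apply (Gbound k h g G y0 M HG Hz Hy0 HM (k - i) i); [lia| lra].
  - rewrite <- scal_sum. unfold Sc. lra.
Qed.


Lemma F1 gam k h g G j x : Ck_derivs k h g G -> (j < k)%nat -> 0 < x -> Icc h x ->
  derive_within (Icc h) (Wf gam G j) x (Wf gam G (S j) x).
Proof.
  intros [H0 [Hc Hd]] Hj xp Hx.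
  apply derive_within_ext_pos with (f := fun y => sum_f_R0 (fun i => T gam G j i y) j); auto.
  { intros y _ yp. rewrite Wf_pos; auto. }
  rewrite Wf_pos by auto. unfold T.
  rewrite <- (coef_identity gam (fun i => G i x) (Rpower x) j).
  apply derive_within_sum. intros i Hi.
  apply (derive_within_mult _ (fun y => c gam j i * G i y) (fun y => Rpower y (e gam j i))).
  - apply derive_within_mult. apply derive_within_const. apply Hd; [lia|auto].
  - apply is_derive_within. apply is_derive_Reals. apply derivable_pt_lim_power. auto.
Qed.

Lemma pow_le1 y p : 0 <= y <= 1 -> y ^ p <= 1.
Proof. intros. rewrite <- (pow1 p). apply pow_incr. lra. Qed.

Theorem lemmaA3 :
  forall (a gamma : R) (k : nat),
    0 < a -> 0 < gamma -> (1 <= k)%nat ->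
    exists C : R, 0 < C /\
      forall (alpha : R) (n m : nat),
        0 < alpha < 1 -> (0 < n)%nat -> is_m alpha n m -> (k <= m)%nat ->
        forall h : R, 0 < h <= a ->
        forall (g : R -> R) (G : nat -> R -> R),
          calC k h g G ->
          exists W : nat -> R -> R,
            calC (k - 1) h (wfun gamma g) W /\
            (forall M : R, (forall y, Icc h y -> Rabs (G k y) <= M) ->
                           Ck_norm_le (k - 1) h W (C * M)).
Proof.
  intros a gam k ha hg hk.
  set (Ka := (a + 1) ^ k * Rpower (a + 1) gam).
  set (Sall := sum_f_R0 (Sc gam) k).
  assert (Kap : 0 < Ka) by (unfold Ka; apply Rmult_lt_0_compat; [apply pow_lt; lra| apply Rpower_pos]).
  assert (Sallp : 0 <= Sall) by (apply cond_pos_sum; intros; apply Sc_nonneg).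
  exists (1 + Ka * Sall). split; [nra|].
  intros alpha n m _ _ _ _ h hh g G [HG Hz].
  exists (Wf gam G).
  assert (Hloc : exists y0, 0 < y0 /\ y0 <= h /\ y0 <= 1 /\ forall y, 0 <= y <= y0 -> Rabs (G k y) <= 1).
  { destruct HG as [_ [Hc _]].
    assert (Hk := Hc k (le_n k) 0 ltac:(unfold Icc; lra)).
    unfold cont_within in Hk. rewrite Hz in Hk by lia.
    destruct (proj1 (filterlim_locally _ _) Hk (mkposreal 1 Rlt_0_1)) as [d Hd].
    set (y0 := Rmin 1 (Rmin h (d / 2))).
    assert (d2 : 0 < d / 2) by (generalize (cond_pos d); lra).
    assert (A1 := Rmin_l 1 (Rmin h (d/2))). assert (A2 := Rmin_r 1 (Rmin h (d/2))).
    assert (A3 := Rmin_l h (d/2)). assert (A4 := Rmin_r h (d/2)).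
    exists y0. repeat split; try (unfold y0; lra).
    - unfold y0. repeat apply Rmin_pos; lra.
    - intros y Hy. left. specialize (Hd y). rewrite ball_R, ball_R in Hd.
      rewrite !Rminus_0_r in Hd. apply Hd.
      + rewrite Rabs_right by lra. generalize (cond_pos d). unfold y0 in Hy. lra.
      + unfold Icc. unfold y0 in Hy. lra. }
  destruct Hloc as [y0 [y0p [y0h [y01 Hy0]]]].
  split; [split; [split; [|split]|]|].
  - intros x Hx. unfold Wf, wfun. destruct Rlt_dec; auto.
    simpl. unfold T, e. simpl INR. destruct HG as [H0 _]. rewrite H0 by auto. 
    change (c gam 0 0) with 1. replace (gam - 1 - 0 + 0) with (gam - 1) by ring. ring.
  - intros j Hj x Hx. destruct (Rlt_dec 0 x) as [xp|xn].
    + eapply derive_within_cont. apply F1 with k g; auto. lia.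
    + assert (x = 0) by (unfold Icc in Hx; lra). subst x.
      unfold cont_within. rewrite Wf_npos by lra.
      apply lim0 with gam (Sc gam j); auto.
      * intros y _ ->. apply Wf_npos; lra.
      * intros y Hy; unfold Icc in Hy; lra.
      * exists y0. split; auto. intros y Dy Hy.
        eapply Rle_trans; [apply (Wbound gam k h g G y0 1 j y HG Hz); auto; try lra; lia|].
        rewrite Rmult_1_r. rewrite Rmult_assoc. apply Rmult_le_compat_l; [apply Sc_nonneg|].
        rewrite <- (Rmult_1_l (Rpower y gam)) at 2. apply Rmult_le_compat_r; [left; apply Rpower_pos|].
        apply pow_le1; lra.
  - intros j Hj x Hx. destruct (Rlt_dec 0 x) as [xp|xn].
    + apply F1 with k g; auto. lia.
    + assert (x = 0) by (unfold Icc in Hx; lra). subst x.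
      unfold derive_within. rewrite !Wf_npos by lra.
      apply lim0 with gam (Sc gam j); auto.
      * intros y [_ ny] E; contradiction.
      * intros y [Hy _]; unfold Icc in Hy; lra.
      * exists y0. split; auto. intros y Dy Hy.
        rewrite Rminus_0_r, Rminus_0_r. unfold Rdiv. rewrite Rabs_mult, Rabs_inv, (Rabs_right y) by lra.
        assert (Wb := Wbound gam k h g G y0 1 j y HG Hz ltac:(lra) ltac:(intros; apply Hy0; auto) ltac:(lia) ltac:(lra)).
        replace (k - 1 - j)%nat with (S (k - 2 - j)) in Wb by lia.
        simpl pow in Wb.
        assert (Hp : y ^ (k - 2 - j) <= 1) by (apply pow_le1; lra).
        assert (Hp0 : 0 <= y ^ (k - 2 - j)) by (apply pow_le; lra).
        assert (Rp := Rpower_pos y gam). assert (Sp := Sc_nonneg gam j).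
        apply Rmult_le_reg_r with y; [lra|].
        rewrite Rmult_assoc, Rinv_l, Rmult_1_r by lra.
        eapply Rle_trans; [exact Wb|]. replace (Sc gam j * 1 * (y * y ^ (k - 2 - j)) * Rpower y gam) with ((Sc gam j * Rpower y gam * y) * y ^ (k - 2 - j)) by ring. rewrite <- (Rmult_1_r (Sc gam j * Rpower y gam * y)) at 2. apply Rmult_le_compat_l; auto. apply Rmult_le_pos; [apply Rmult_le_pos|]; lra.
  - intros j Hj. apply Wf_npos. lra.
  - intros M HM j Hj x Hx.
    assert (Mp : 0 <= M) by (eapply Rle_trans; [apply Rabs_pos| apply (HM 0); unfold Icc; lra]).
    destruct (Rlt_dec 0 x) as [xp|xn].
    + eapply Rle_trans; [apply (Wbound gam k h g G h M j x HG Hz); [lra| intros y Hy; apply HM; unfold Icc; lra | lia | unfold Icc in Hx; lra]|].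
      assert (P1 : x ^ (k - 1 - j) <= (a + 1) ^ k).
      { eapply Rle_trans; [apply pow_incr with (y := a + 1); unfold Icc in Hx; lra|].
        apply Rle_pow; [lra|lia]. }
      assert (P2 : Rpower x gam <= Rpower (a + 1) gam).
      { apply Rle_Rpower_l; [lra|]. unfold Icc in Hx; lra. }
      assert (P3 : Sc gam j <= Sall).
      { unfold Sall. apply (term_le_sum (Sc gam)); [apply Sc_nonneg|lia]. }
      assert (P0 : 0 <= x ^ (k - 1 - j)) by (apply pow_le; lra).
      assert (Rp := Rpower_pos x gam). assert (Sp := Sc_nonneg gam j).
      assert (Q : x ^ (k - 1 - j) * Rpower x gam <= Ka).
      { unfold Ka. apply Rmult_le_compat; auto. lra. }
      assert (Q0 : 0 <= x ^ (k - 1 - j) * Rpower x gam) by nra.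
      assert (Q2 : Sc gam j * (x ^ (k - 1 - j) * Rpower x gam) <= Sall * Ka) by (apply Rmult_le_compat; auto).
      assert (Sc gam j * M * x ^ (k - 1 - j) * Rpower x gam = M * (Sc gam j * (x ^ (k - 1 - j) * Rpower x gam))) by ring.
      rewrite H. nra.
    + rewrite Wf_npos, Rabs_R0 by auto. assert (0 <= Ka * Sall) by (apply Rmult_le_pos; lra). apply Rmult_le_pos; lra.
Qed.
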